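(* Let $\mathsf{K}$ be a quasivariety, $\mathbf{B}\in\mathsf{K}$, and $\mathbf{A}\leq\mathbf{B}$ full in $\mathsf{K}$. If $\theta,\phi\in\mathrm{Con}_{\mathsf{K}}(\mathbf{B})$ satisfy $\theta\neq\phi$ and $\theta{\upharpoonright}_A=\phi{\upharpoonright}_A$, then $\theta\cap\phi=\mathrm{id}_B$.
   Context: A quasivariety is a class of similar algebras closed under isomorphic copies, subalgebras, direct products and ultraproducts. $\mathrm{Con}_{\mathsf{K}}(\mathbf{B})$ is the set of congruences $\theta$ of $\mathbf{B}$ with $\mathbf{B}/\theta\in\mathsf{K}$; $\theta{\upharpoonright}_A=\theta\cap(A\times A)$. $\mathbf{A}\leq\mathbf{B}$ is full in $\mathsf{K}$ if it is proper, almost total ($B=\mathrm{Sg}^{\mathbf{B}}(A\cup\{b\})$ for some $b\in B$), and for every $\theta\in\mathrm{Con}_{\mathsf{K}}(\mathbf{B})$ with $\theta\neq\mathrm{id}_B$ and every $b\in B$ there is $a\in A$ with $\langle a,b\rangle\in\theta$. *)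

(* Defs.v *)
From mathcomp Require Import all_boot.
From Stdlib Require Import ClassicalEpsilon.
Set Implicit Arguments.
Unset Strict Implicit.
Unset Printing Implicit Defensive.

Record signature := Signature { sym : Type; arity : sym -> nat }.

Record algebra (sg : signature) := Algebra {
  carrier :> Type;
  op : forall f : sym sg, ('I_(arity f) -> carrier) -> carrier }.
Arguments op {sg} _ _ _.

Section UA.
Variable sg : signature.

Definition is_hom (A B : algebra sg) (h : A -> B) : Prop :=
  forall f (args : 'I_(arity f) -> A), h (op A f args) = op B f (fun k => h (args k)).

Definition isomorphic (A B : algebra sg) : Prop :=
  exists h : A -> B, is_hom h /\ (forall x y, h x = h y -> x = y) /\ (forall y, exists x, h x = y).

Definition subuniverse (A : algebra sg) (S : A -> Prop) : Prop :=
  forall f (args : 'I_(arity f) -> A), (forall k, S (args k)) -> S (op A f args).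

Definition subalg (A : algebra sg) (S : A -> Prop) (HS : subuniverse S) : algebra sg :=
  @Algebra sg {x : A | S x}
    (fun f args => exist _ (op A f (fun k => proj1_sig (args k)))
                          (HS f _ (fun k => proj2_sig (args k)))).

Definition Sg (A : algebra sg) (X : A -> Prop) : A -> Prop :=
  fun a => forall S : A -> Prop, subuniverse S -> (forall x, X x -> S x) -> S a.

Definition prod_alg (I : Type) (A : I -> algebra sg) : algebra sg :=
  @Algebra sg (forall i, A i) (fun f args => fun i => op (A i) f (fun k => args k i)).

Definition congruence (A : algebra sg) (R : A -> A -> Prop) : Prop :=
  (forall x, R x x) /\ (forall x y, R x y -> R y x) /\
  (forall x y z, R x y -> R y z -> R x z) /\
  (forall f (a b : 'I_(arity f) -> A), (forall k, R (a k) (b k)) ->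
      R (op A f a) (op A f b)).

Definition qcarrier (A : algebra sg) (R : A -> A -> Prop) : Type :=
  {X : A -> Prop | exists a, X = R a}.
Definition qclass (A : algebra sg) (R : A -> A -> Prop) (a : A) : qcarrier R :=
  exist _ (R a) (ex_intro _ a erefl).
Definition qrep (A : algebra sg) (R : A -> A -> Prop) (X : qcarrier R) : A :=
  proj1_sig (constructive_indefinite_description _ (proj2_sig X)).
Definition quot (A : algebra sg) (R : A -> A -> Prop) : algebra sg :=
  @Algebra sg (qcarrier R) (fun f args => qclass R (op A f (fun k => qrep (args k)))).

Definition ultrafilter (I : Type) (U : (I -> Prop) -> Prop) : Prop :=
  U (fun _ => True) /\ ~ U (fun _ => False) /\
  (forall X Y : I -> Prop, U X -> (forall i, X i -> Y i) -> U Y) /\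
  (forall X Y : I -> Prop, U X -> U Y -> U (fun i => X i /\ Y i)) /\
  (forall X : I -> Prop, U X \/ U (fun i => ~ X i)).

Definition ultraproduct (I : Type) (U : (I -> Prop) -> Prop) (A : I -> algebra sg) :
  algebra sg :=
  quot (fun x y : prod_alg A => U (fun i => x i = y i)).

Definition quasivariety (K : algebra sg -> Prop) : Prop :=
  (forall A B : algebra sg, K A -> isomorphic B A -> K B) /\
  (forall (A : algebra sg) (S : A -> Prop) (HS : subuniverse S), K A -> (exists x, S x) -> K (subalg HS)) /\
  (forall (I : Type) (A : I -> algebra sg), (forall i, K (A i)) -> K (prod_alg A)) /\
  (forall (I : Type) (U : (I -> Prop) -> Prop) (A : I -> algebra sg),
      ultrafilter U -> (forall i, K (A i)) -> K (ultraproduct U A)).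

Definition ConK (K : algebra sg -> Prop) (B : algebra sg) (R : B -> B -> Prop) : Prop :=
  congruence R /\ K (quot R).

Definition full_in (K : algebra sg -> Prop) (B : algebra sg) (A : B -> Prop) : Prop :=
  (exists b, ~ A b) /\
  (exists b, forall c, Sg (fun x => A x \/ x = b) c) /\
  (forall theta : B -> B -> Prop, ConK K theta ->
     ~ (forall x y, theta x y <-> x = y) ->
     forall b, exists a, A a /\ theta a b).

End UA.

(* Main.v *)
Require Import Defs.
From mathcomp Require Import all_boot.
From Stdlib Require Import FunctionalExtensionality PropExtensionality ProofIrrelevance Classical ClassicalEpsilon.

Section H.
Variable sg : signature.
Variable B : algebra sg.

Lemma qclass_eq (R : B -> B -> Prop) a b : congruence R -> R a b -> qclass R a = qclass R b.
Proof.
move=> [Rr [Rs [Rt _]]] Hab.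
have E : R a = R b.
  apply: functional_extensionality => z; apply: propositional_extensionality.
  split => H; [exact: Rt (Rs _ _ Hab) H | exact: Rt Hab H].
apply: eq_sig_hprop => [*|]; [exact: proof_irrelevance | exact: E].
Qed.

Lemma qclass_inv (R : B -> B -> Prop) a b : congruence R -> qclass R a = qclass R b -> R a b.
Proof.
move=> [Rr _] E. have := f_equal (@proj1_sig _ _) E => /= ->. exact: Rr.
Qed.

Lemma qclass_rep (R : B -> B -> Prop) (X : qcarrier R) : X = qclass R (qrep X).
Proof.
rewrite /qrep. case: (constructive_indefinite_description _ _) => c /= Hc.
case: X Hc => P pf /= Hc. subst P. rewrite /qclass.
by rewrite (proof_irrelevance _ pf (ex_intro _ c erefl)).
Qed.

Lemma qrep_class (R : B -> B -> Prop) a : congruence R -> R (qrep (qclass R a)) a.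
Proof.
move=> HR. apply: qclass_inv => //. by rewrite -qclass_rep.
Qed.

Lemma cong_inter (R S : B -> B -> Prop) : congruence R -> congruence S ->
  congruence (fun x y => R x y /\ S x y).
Proof.
move=> [Rr [Rs [Rt Rc]]] [Sr [Ss [St Sc]]]; split; [|split; [|split]].
- by move=> x; split.
- by move=> x y [h1 h2]; split; auto.
- by move=> x y z [h1 h2] [h3 h4]; split; eauto.
- move=> f a b H; split; [apply: Rc | apply: Sc] => k; by case: (H k).
Qed.

End H.

Lemma inter_ConK (sg : signature) (K : algebra sg -> Prop) (B : algebra sg) :
  quasivariety K -> (exists b : B, True) ->
  forall theta phi : B -> B -> Prop, ConK K theta -> ConK K phi ->
  ConK K (fun x y => theta x y /\ phi x y).
Proof.
move=> [Kiso [Ksub [Kprod _]]] [b0 _] theta phi [Ct Kt] [Cp Kp].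
set psi := fun x y => theta x y /\ phi x y.
have Cpsi : congruence psi by exact: cong_inter.
split => //.
pose Af := fun i : bool => if i then quot theta else quot phi.
pose g := fun b : B => (fun i => match i return Af i with
          | true => qclass theta b | false => qclass phi b end) : prod_alg Af.
pose S := fun p : prod_alg Af => exists b, p = g b.
have gop : forall f (bs : 'I_(arity f) -> B),
    op (prod_alg Af) f (fun k => g (bs k)) = g (op B f bs).
  move=> f bs; apply: functional_extensionality_dep => -[] /=.
  - apply: qclass_eq => //. have [_ [_ [_ Cc]]] := Ct. apply: Cc => k. exact: qrep_class.
  - apply: qclass_eq => //. have [_ [_ [_ Cc]]] := Cp. apply: Cc => k. exact: qrep_class.
have HS : subuniverse S.
  move=> f args H.
  have [bs Hb] : exists bs : 'I_(arity f) -> B, forall k, args k = g (bs k).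
    exists (fun k => proj1_sig (constructive_indefinite_description _ (H k))).
    move=> k; by case: (constructive_indefinite_description _ _).
  exists (op B f bs). rewrite -gop. congr (op _ f _).
  exact: functional_extensionality.
have KP : K (prod_alg Af) by apply: Kprod => -[].
have KS : K (subalg HS) by apply: Ksub => //; exists (g b0), b0.
apply: (Kiso _ _ KS).
have gpsi : forall x y, psi x y -> g x = g y.
  move=> x y [h1 h2]; apply: functional_extensionality_dep => -[] /=;
  exact: qclass_eq.
pose h := fun X : quot psi => (exist S (g (qrep X)) (ex_intro _ _ erefl) : subalg HS).
exists h; split; [|split].
- move=> f args. apply: eq_sig_hprop; first by move=> *; apply: proof_irrelevance.
  rewrite /= -[RHS]/(op (prod_alg Af) f (fun k => g (qrep (args k)))) gop.
  apply: gpsi. exact: qrep_class.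
- move=> X Y E. have E' := f_equal (@proj1_sig _ _) E. simpl in E'.
  rewrite (@qclass_rep _ _ _ X) (@qclass_rep _ _ _ Y). apply: qclass_eq => //.
  split.
  + apply: (@qclass_inv _ _ theta) => //. exact: (f_equal (fun p => p true) E').
  + apply: (@qclass_inv _ _ phi) => //. exact: (f_equal (fun p => p false) E').
- move=> [p [b Hb]]. exists (qclass psi b).
  apply: eq_sig_hprop; first by move=> *; apply: proof_irrelevance.
  rewrite /= Hb. apply: gpsi. exact: qrep_class.
Qed.

Theorem mainTheorem5 (sg : signature) (K : algebra sg -> Prop) (B : algebra sg)
  (A : B -> Prop) :
  quasivariety K -> K B ->
  subuniverse A -> (exists a, A a) ->
  full_in K A ->
  forall theta phi : B -> B -> Prop,
    ConK K theta -> ConK K phi ->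
    ~ (forall x y, theta x y <-> phi x y) ->
    (forall a a', A a -> A a' -> (theta a a' <-> phi a a')) ->
    forall x y, theta x y /\ phi x y <-> x = y.
Proof.
move=> QK KB HA [a0 Aa0] [_ [_ Hfull]] theta phi Ht Hp Hne Hag.
have Hi := @inter_ConK _ K B QK (ex_intro _ a0 I) _ _ Ht Hp.
have [[Tr [Ts [Tt _]]] _] := Ht. have [[Pr [Ps [Pt _]]] _] := Hp.
apply: NNPP => Hn. apply: Hne.
have Hn' : ~ (forall x y, theta x y /\ phi x y <-> x = y).
  by move=> H; apply: Hn; apply: H.
have F := Hfull _ Hi Hn'.
have side : forall (R1 R2 : B -> B -> Prop),
    (forall x, R2 x x) -> (forall x y, R2 x y -> R2 y x) ->
    (forall x y z, R2 x y -> R2 y z -> R2 x z) ->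
    (forall x y, R1 x y -> R1 y x) -> (forall x y z, R1 x y -> R1 y z -> R1 x z) ->
    (forall a a', A a -> A a' -> R1 a a' -> R2 a a') ->
    (forall b, exists a, A a /\ R1 a b /\ R2 a b) ->
    forall x y, R1 x y -> R2 x y.
  move=> R1 R2 _ S2 T2 S1 T1 Hag' Fb x y Hxy.
  have [a [Aa [h1 h2]]] := Fb x. have [a' [Aa' [h3 h4]]] := Fb y.
  eapply T2; first exact: (S2 _ _ h2). eapply T2; last exact: h4. apply: Hag' => //.
  eapply T1; first exact: h1. eapply T1; first exact: Hxy. exact: S1.
move=> x y; split => H.
- apply: (side theta phi Pr Ps Pt Ts Tt _ _ x y H).
  + by move=> a a' Aa Aa'; case: (Hag a a' Aa Aa').
  + move=> b; have [a [Aa [h1 h2]]] := F b; by exists a.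
- apply: (side phi theta Tr Ts Tt Ps Pt _ _ x y H).
  + by move=> a a' Aa Aa'; case: (Hag a a' Aa Aa').
  + move=> b; have [a [Aa [h1 h2]]] := F b; by exists a.
Qed.
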